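(* Let $X$ be a topological space satisfying the $T_{3\frac12}$ separation axiom. The following assertions are equivalent: (a) $X$ is CCC; (b) $X$ satisfies CCC for cozero sets; (c) $C(X)$ has the countable sup property. Moreover, if $C_b(X)$ admits a strictly positive linear functional, then (a), (b) and (c) hold.
   Context: $X$ satisfies $T_{3\frac12}$ if it is Hausdorff and for every closed $F\subseteq X$ and $x\notin F$ there is a continuous $f\colon X\to\mathbb R$ with $f(x)=1$ and $f\equiv0$ on $F$. $X$ is CCC if every family of pairwise disjoint open subsets of $X$ is countable. A cozero set is a set $\{x: f(x)\neq0\}$ with $f\in C(X)$; $X$ satisfies CCC for cozero sets if every collection of pairwise disjoint cozero sets is countable. $C(X)$ (resp. $C_b(X)$) is the vector lattice of real-valued continuous (resp. bounded continuous) functions with the pointwise order. A vector lattice has the countable sup property if every nonempty subset possessing a supremum contains a countable subset with the same supremum. A positive functional $\varphi$ is strictly positive if $f\ge0$, $\varphi(f)=0$ imply $f=0$. *)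

(* Defs.v *)
From HB Require Import structures.
From mathcomp Require Import all_boot all_order all_algebra.
From mathcomp Require Import all_classical all_reals all_analysis.
From mathcomp Require Import Rstruct Rstruct_topology.
Set Implicit Arguments. Unset Strict Implicit. Unset Printing Implicit Defensive.
Import Order.TTheory GRing.Theory Num.Theory.
Local Open Scope classical_set_scope.
Local Open Scope ring_scope.

Notation RR := Rdefinitions.R.

Definition T3half (X : topologicalType) : Prop :=
  hausdorff_space X /\
  forall (F : set X) (x : X), closed F -> ~ F x ->
    exists f : X -> RR, continuous f /\ f x = 1 /\ (forall y, F y -> f y = 0).

Definition pw_disjoint (X : Type) (F : set (set X)) : Prop :=
  forall U V, F U -> F V -> U <> V -> U `&` V = set0.

Definition CCC (X : topologicalType) : Prop :=
  forall F : set (set X), (forall U, F U -> open U) -> pw_disjoint F ->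
    countable F.

Definition cozero (X : topologicalType) (U : set X) : Prop :=
  exists f : X -> RR, continuous f /\ U = [set x | f x != 0].

Definition CCC_cozero (X : topologicalType) : Prop :=
  forall F : set (set X), (forall U, F U -> cozero U) -> pw_disjoint F ->
    countable F.

Definition CX (X : topologicalType) : set (X -> RR) :=
  [set f : X -> RR | continuous f].

Definition fle (X : Type) (f g : X -> RR) : Prop := forall x, f x <= g x.

Definition is_sup_CX (X : topologicalType) (S : set (X -> RR)) (s : X -> RR)
  : Prop :=
  CX s /\ (forall f, S f -> fle f s) /\
  (forall g, CX g -> (forall f, S f -> fle f g) -> fle s g).

Definition countable_sup_CX (X : topologicalType) : Prop :=
  forall (S : set (X -> RR)) (s : X -> RR),
    S `<=` @CX X -> S !=set0 -> is_sup_CX S s ->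
    exists S' : set (X -> RR), S' `<=` S /\ countable S' /\ is_sup_CX S' s.

Definition CbX (X : topologicalType) : set (X -> RR) :=
  [set f : X -> RR | continuous f /\ exists M : RR, forall x, `|f x| <= M].

(* a strictly positive linear functional on C_b(X) (given as a function on
   all of X -> R, only its restriction to C_b(X) matters) *)
Definition strictly_positive_functional (X : topologicalType)
  (phi : (X -> RR) -> RR) : Prop :=
  (forall (a : RR) f g, @CbX X f -> @CbX X g ->
     phi (fun x => a * f x + g x) = a * phi f + phi g) /\
  (forall f, @CbX X f -> (forall x, 0 <= f x) -> 0 <= phi f) /\
  (forall f, @CbX X f -> (forall x, 0 <= f x) -> phi f = 0 -> f = (fun _ => 0)).

(* Main.v *)
Require Import Defs.
From mathcomp Require Import all_boot all_order all_algebra.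
From mathcomp Require Import all_classical all_reals all_analysis.
From mathcomp Require Import Rstruct Rstruct_topology.
Import Order.TTheory GRing.Theory Num.Theory.
Import numFieldNormedType.Exports.
Local Open Scope classical_set_scope.
Local Open Scope ring_scope.

Section S.
Context {X : topologicalType}.
Implicit Types f g : X -> RR.

Lemma cD f g : continuous f -> continuous g -> continuous (fun x => f x + g x).
Proof. move=> cf cg x; exact: (@continuousD RR RR^o X f g x (cf x) (cg x)). Qed.
Lemma cB f g : continuous f -> continuous g -> continuous (fun x => f x - g x).
Proof. move=> cf cg x; exact: (@continuousB RR RR^o X f g x (cf x) (cg x)). Qed.
Lemma cC (c : RR) : continuous (fun _ : X => c).
Proof. exact: cst_continuous. Qed.
Lemma cmin f g : continuous f -> continuous g -> continuous (fun x => Num.min (f x) (g x)).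
Proof. move=> cf cg x; have := (@continuous_min RR X f g x (cf x) (cg x)). done. Qed.
Lemma cnorm f : continuous f -> continuous (fun x => `|f x|).
Proof. move=> cf x. apply: continuous_comp; first exact: cf. exact: (@norm_continuous RR RR^o). Qed.

Lemma bumpf (hX : T3half X) (U : set X) y : open U -> U y ->
  exists k : X -> RR, continuous k /\ k y = 1 /\ (forall x, 0 <= k x <= 1) /\
    (forall x, ~ U x -> k x = 0).
Proof.
move=> oU Uy.
have [f [cf [fy f0]]] := hX.2 (~` U) y (open_closedC oU) (fun h => h Uy).
exists (fun x => Num.min `|f x| 1); split; first by apply: cmin; [exact: cnorm|exact: cC].
split; first by rewrite fy normr1 minxx.
split; first by move=> x; rewrite ge_min lexx orbT andbT le_min normr_ge0 ler01.
by move=> x nUx; rewrite f0 // normr0 (minElt 0 1) ltr01.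
Qed.

Lemma cozero_open (U : set X) : cozero U -> open U.
Proof.
move=> [f [cf ->]].
have -> : [set x | f x != 0] = f @^-1` [set r : RR | r != 0] by [].
apply: open_comp; first by move=> x _; exact: cf.
exact: (@open_neq RR 0).
Qed.

End S.

Lemma countU T (A B : set T) : countable A -> countable B -> countable (A `|` B).
Proof.
move=> cA cB.
have -> : A `|` B = \bigcup_(b in [set: bool]) (if b then A else B).
  apply/seteqP; split=> x.
    by case=> ?; [exists true|exists false].
  by case=> -[] _ ?; [left|right].
by apply: bigcup_countable; [exact: countableP | case].
Qed.

Lemma L1 (X : topologicalType) : CCC X -> CCC_cozero X.
Proof. by move=> cc F Fc Fd; apply: cc => // U /Fc; exact: cozero_open. Qed.

Lemma L2 (X : topologicalType) : T3half X -> CCC_cozero X -> CCC X.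
Proof.
move=> hX cc F Fo Fd.
have /boolp.choice[c hc] : forall U : set X, exists C : set X, open U ->
    C `<=` U /\ cozero C /\ (U !=set0 -> C !=set0).
  move=> U.
  case: (pselect (open U /\ U !=set0)) => [[oU [y Uy]]|h].
    have [k [kc [ky [k01 k0]]]] := bumpf hX U y oU Uy.
    exists [set x | k x != 0] => _; split.
      move=> x /= kx; apply: contrapT => nU; by rewrite k0 ?eqxx in kx.
    split; first by exists k.
    by move=> _; exists y; rewrite /= ky oner_neq0.
  exists set0 => oU; split=> //; split.
    exists (fun=> 0); split; first exact: cC.
    by apply/seteqP; split=> x //=; rewrite eqxx.
  by move=> nU; exfalso; apply: h.
have cF : countable (c @` F).
  apply: cc; first by move=> _ [U FU <-]; exact: (hc U (Fo U FU)).2.1.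
  move=> _ _ [U FU <-] [V FV <-] cUV.
  have UV : U <> V by move=> E; apply: cUV; rewrite E.
  apply/seteqP; split=> [x [h1 h2]|//]; rewrite -(Fd U V FU FV UV).
  split; [exact: (hc U (Fo U FU)).1 | exact: (hc V (Fo V FV)).1].
apply: sub_countable cF.
have : $|{injfun F >-> c @` F}|.
  apply/injfunPex; exists c; first by move=> U FU; exists U.
  move=> U V /set_mem FU /set_mem FV cUV.
  have hU := hc U (Fo U FU); have hV := hc V (Fo V FV).
  case: (pselect (U !=set0)) => [nU|eU].
    case: (hU.2.2 nU) => z cUz; apply: contrapT => UV.
    have := Fd U V FU FV UV; move/seteqP => [+ _] => /(_ z); apply.
    by split; [exact: hU.1 _ cUz | apply: hV.1; rewrite -cUV].
  case: (pselect (V !=set0)) => [nV|eV].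
    case: (hV.2.2 nV) => z cVz; exfalso; apply: eU; exists z; apply: hU.1.
    by rewrite cUV.
  by move/nonemptyPn: eU => ->; move/nonemptyPn: eV => ->.
by case=> g; exact: inj_card_le g.
Qed.

Lemma L3 (X : topologicalType) : T3half X -> countable_sup_CX X -> CCC_cozero X.
Proof.
move=> hX csp F Fc Fd; apply: contrapT => ncF.
pose one := fun _ : X => (1 : RR).
pose P (f : X -> RR) (A : set (set X)) := A `<=` F /\ countable A /\
  forall U, F U -> ~ A U -> forall x, U x -> f x <= 0.
pose S := [set f : X -> RR | continuous f /\ (forall x, f x <= 1) /\ exists A, P f A].
have Fo U : F U -> open U by move/Fc; exact: cozero_open.
have disj U V x : F U -> F V -> U x -> V x -> U = V.
  move=> FU FV Ux Vx; apply: contrapT => UV.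
  by have := Fd U V FU FV UV; move/seteqP => [+ _] => /(_ x); apply.
have hsup : is_sup_CX S one.
  split; first exact: cC.
  split; first by move=> f [_ [f1 _]] x; exact: f1.
  move=> g cg ubg x; rewrite /one leNgt; apply/negP => gx.
  have oW : open [set y | g y < 1].
    have -> : [set y | g y < 1] = g @^-1` [set r : RR | r < 1] by [].
    apply: open_comp; first by move=> z _; exact: cg.
    exact: (@open_lt RR 1).
  case: (pselect (exists U, F U /\ exists y, U y /\ g y < 1)) => [[U [FU [y [Uy gy]]]]|h].
    have [k [kc [ky [k01 k0]]]] := bumpf hX U y (Fo U FU) Uy.
    have Sk : S k.
      split=> //; split; first by move=> z; case/andP: (k01 z).
      exists [set U]; split; first by move=> _ ->.
      split; first exact: countable1.
      move=> V FV nVU z Vz; rewrite k0 // => Uz; apply: nVU.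
      exact: (disj V U z FV FU Vz Uz).
    have := ubg k Sk y; rewrite ky => h1.
    by move: (le_lt_trans h1 gy); rewrite ltxx.
  have [k [kc [ky [k01 k0]]]] := bumpf hX _ x oW gx.
  have Sk : S k.
    split=> //; split; first by move=> z; case/andP: (k01 z).
    exists set0; split=> //; split; first exact: countable0.
    move=> V FV _ z Vz; rewrite k0 // => gz; apply: h; by exists V; split => //; exists z.
  have := ubg k Sk x; rewrite ky => h1.
  by move: (le_lt_trans h1 gx); rewrite ltxx.
have SC : S `<=` CX (X:=X) by move=> f [].
have S0 : S !=set0.
  exists (fun=> 0); split; first exact: cC.
  split; first by move=> _; exact: ler01.
  exists set0; split; first by [].
  split; first exact: countable0.
  by move=> *.
have [S' [S'S [cS' hS']]] := csp S one SC S0 hsup.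
have /boolp.choice[Af hAf] : forall f : X -> RR, exists A, S f -> P f A.
  move=> f; case: (pselect (S f)) => [[_ [_ [A hA]]]|nS]; first by exists A.
  by exists set0.
pose B := \bigcup_(f in S') Af f.
have cntB : countable B.
  apply: bigcup_countable => // f S'f; exact: (hAf f (S'S f S'f)).2.1.
have [U [FU [nBU [y Uy]]]] : exists U, F U /\ ~ B U /\ U !=set0.
  apply: contrapT => hn; apply: ncF.
  have cB0 : countable (B `|` [set (set0 : set X)]) := @countU _ _ _ cntB (countable1 _).
  apply: (sub_countable _ cB0).
  apply: subset_card_le => U FU.
  case: (pselect (B U)) => [BU|nBU]; first by left.
  right; apply/nonemptyPn => nU; apply: hn; exists U; split=> //.
have [k [kc [ky [k01 k0]]]] := bumpf hX U y (Fo U FU) Uy.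
have cg : CX (X:=X) (fun x => 1 - k x) by apply: cB; [exact: cC|].
have ubg : forall f, S' f -> fle f (fun x => 1 - k x).
  move=> f S'f x; have [_ [f1 _]] := S'S f S'f.
  case: (pselect (U x)) => [Ux|nUx]; last by rewrite k0 // subr0.
  have hP := hAf f (S'S f S'f).
  have fx : f x <= 0.
    apply: hP.2.2 FU _ x Ux => AU; apply: nBU; by exists f.
  by apply: (le_trans fx); rewrite subr_ge0; case/andP: (k01 x).
have := hS'.2.2 _ cg ubg y; rewrite /one ky subrr.
by rewrite ler10.
Qed.

Lemma L4 (X : topologicalType) : T3half X -> CCC X -> countable_sup_CX X.
Proof.
move=> hX cc S s SC _ [Cs [ubs lub]].
pose D (q : rat) := [set V : set X | open V /\ V !=set0 /\
  exists f, S f /\ V `<=` [set x | ratr q < f x]].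
have /boolp.choice[E hE] : forall q, exists E,
    maximal_disjoint_subcollection (fun V : set X => V) E (D q).
  by move=> q; case: (ex_maximal_disjoint_subcollection (fun V : set X => V) (D q)) => E h; exists E.
have cE q : countable (E q).
  have [ED tE _] := hE q.
  apply: cc; first by move=> U /ED [].
  move=> U V EU EV UV; apply/nonemptyPn => ne; apply: UV; exact: tE.
have /boolp.choice[pk hpk] : forall qV : rat * set X, exists f,
    D qV.1 qV.2 -> S f /\ qV.2 `<=` [set x | ratr qV.1 < f x].
  move=> [q V]; case: (pselect (D q V)) => [[_ [_ [f hf]]]|nD]; first by exists f.
  by exists s.
pose S' := \bigcup_(q in [set: rat]) ((fun V => pk (q, V)) @` E q).
exists S'; split.
  move=> _ [q _ [V EV <-]].
  have [ED _ _] := hE q.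
  exact: (hpk (q, V) (ED V EV)).1.
split.
  apply: bigcup_countable; first exact: countableP.
  move=> q _; exact: (sub_countable (card_image_le _ _) (cE q)).
split=> //.
split.
  move=> f [q _ [V EV <-]]; apply: ubs.
  have [ED _ _] := hE q.
  exact: (hpk (q, V) (ED V EV)).1.
move=> g cg ubg.
pose t := fun x => Num.min (s x) (g x).
have ct : CX (X:=X) t by apply: cmin.
have ubt : forall f, S f -> fle f t.
  move=> f Sf x; rewrite leNgt; apply/negP => tf.
  have [q] := rat_in_itvoo tf; rewrite in_itv /= => /andP[h1 h2].
  pose V := [set y | ratr q < f y] `&` [set y | t y < ratr q].
  have oV : open V.
    apply: openI.
      have -> : [set y | ratr q < f y] = f @^-1` [set r : RR | ratr q < r] by [].
      apply: open_comp; first by move=> z _; exact: (SC f Sf).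
      exact: (@open_gt RR).
    have -> : [set y | t y < ratr q] = t @^-1` [set r : RR | r < ratr q] by [].
    apply: open_comp; first by move=> z _; exact: ct.
    exact: (@open_lt RR).
  have DV : D q V.
    split=> //; split; first by exists x.
    by exists f; split=> // z [].
  have [ED tE mE] := hE q.
  have [m [Em [z [mz Vz]]]] : exists m, E q m /\ (m `&` V) !=set0.
    apply: contrapT => hn.
    apply: (mE (E q `|` [set V])).
    - split; first by move=> W EW; left.
      move=> /(_ V (or_intror erefl)) EV; apply: hn; exists V; split=> //.
      by exists x.
    - by move=> W [/ED|->].
    - move=> i j [Ei|->] [Ej|->] ne //.
      + exact: tE.
      + by exfalso; apply: hn; exists i.
      + by exfalso; apply: hn; exists j; rewrite setIC.
  have [Sh mh] := hpk (q, m) (ED m Em).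
  have S'h : S' (pk (q, m)) by exists q => //; exists m.
  have hz : pk (q, m) z <= t z.
    by rewrite le_min; apply/andP; split; [exact: ubs | exact: ubg].
  have := mh z mz; rewrite /= => h3.
  case: Vz => _ /= h4.
  by move: (lt_trans (le_lt_trans hz h4) h3); rewrite ltxx.
move=> x; apply: (le_trans (lub t ct ubt x)).
by rewrite /t ge_min lexx orbT.
Qed.

Lemma cb01 (X : topologicalType) (f : X -> RR) : continuous f ->
  (forall x, 0 <= f x <= 1) -> CbX f.
Proof.
move=> cf f01; split=> //; exists 1 => x.
by have /andP[h0 h1] := f01 x; rewrite ger0_norm.
Qed.

Lemma L5 (X : topologicalType) : T3half X ->
  (exists phi : (X -> RR) -> RR, strictly_positive_functional phi) -> CCC X.
Proof.
move=> hX [phi [lin [pos spos]]] F Fo Fd.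
have /boolp.choice[k hk] : forall U : set X, exists k : X -> RR, open U -> U !=set0 ->
    continuous k /\ (forall x, 0 <= k x <= 1) /\ (forall x, ~ U x -> k x = 0) /\
    exists y, k y = 1.
  move=> U; case: (pselect (open U /\ U !=set0)) => [[oU [y Uy]]|h].
    have [k [kc [ky [k01 k0]]]] := bumpf hX U y oU Uy.
    by exists k => _ _; split=> //; split=> //; split=> //; exists y.
  by exists (fun=> 0) => oU nU; exfalso; apply: h.
have phik U : F U -> U !=set0 -> 0 < phi (k U).
  move=> FU nU; have [kc [k01 [k0 [y ky]]]] := hk U (Fo U FU) nU.
  have cbk : CbX (k U) by apply: cb01.
  have pk : forall x, 0 <= k U x by move=> x; case/andP: (k01 x).
  rewrite lt_neqAle pos // andbT; apply/negP => /eqP e.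
  have := spos _ cbk pk (esym e) => /(congr1 (fun f => f y)).
  by rewrite ky => /eqP; rewrite oner_eq0.
pose one := fun _ : X => (1 : RR).
have cbone : CbX one by apply: cb01; [exact: cC | move=> x; rewrite ler01 lexx].
pose Fn (n : nat) := [set U | F U /\ U !=set0 /\ (n.+1%:R)^-1 < phi (k U)].
have finFn n : finite_set (Fn n).
  apply: contrapT => inf.
  have key : forall N : nat, exists g G, CbX g /\ (forall x, 0 <= g x <= 1) /\
      N%:R / n.+1%:R <= phi g /\ G `<=` Fn n /\ finite_set G /\
      (forall x, g x != 0 -> exists U, G U /\ U x).
    elim => [|N [g [G [cbg [g01 [pg [GF [fG sg]]]]]]]].
      exists (fun=> 0), set0; split.
        by split; [exact: cC | exists 0 => x; rewrite normr0].
      split; first by move=> x; rewrite lexx ler01.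
      split; first by rewrite mul0r; apply: pos => //; split; [exact: cC | exists 0 => x; rewrite normr0].
      split=> //; split; first exact: finite_set0.
      by move=> x; rewrite eqxx.
    have [U [FnU nGU]] : exists U, Fn n U /\ ~ G U.
      apply: contrapT => hn; apply: inf; apply: (sub_finite_set _ fG) => U FnU.
      by apply: contrapT => nG; apply: hn; exists U.
    have [FU [nU pU]] := FnU.
    have [kc [k01 [k0 _]]] := hk U (Fo U FU) nU.
    have cbk : CbX (k U) by apply: cb01.
    have e1 : (fun x => 1 * k U x) = k U by apply/funext => x; rewrite mul1r.
    have g'01 : forall x, 0 <= 1 * k U x + g x <= 1.
      move=> x; rewrite mul1r; case: (pselect (U x)) => Ux.
        have -> : g x = 0.
          apply/eqP; apply: contrapT => /negP gx.
          have [V [GV Vx]] := sg x gx.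
          have FV : F V by have [] := GF V GV.
          have VU : V = U.
            apply: contrapT => VU; have := Fd V U FV FU VU.
            by move/seteqP => [+ _] => /(_ x); apply.
          by apply: nGU; rewrite -VU.
        by rewrite addr0.
      by rewrite k0 // add0r.
    exists (fun x => 1 * k U x + g x), (G `|` [set U]); split.
      apply: cb01 => //; apply: cD; last by case: cbg.
      by rewrite e1.
    split=> //; split.
      rewrite lin // mul1r.
      have -> : N.+1%:R / n.+1%:R = n.+1%:R^-1 + N%:R / n.+1%:R :> RR.
        by rewrite -natr1 mulrDl mul1r addrC.
      exact: lerD (ltW pU) pg.
    split; first by move=> V [/GF|->].
    split; first by rewrite finite_setU; split=> //; exact: finite_set1.
    move=> x; rewrite mul1r => hx; case: (pselect (U x)) => Ux.
      by exists U; split=> //; right.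
    move: hx; rewrite k0 // add0r => hx.
    by have [V [GV Vx]] := sg x hx; exists V; split=> //; left.
  pose N := (Num.Def.truncn (phi one * n.+1%:R)).+1.
  have [g [G [cbg [g01 [pg _]]]]] := key N.
  have cbg' : CbX (fun x => 1 - g x).
    apply: cb01; first by apply: cB; [exact: cC | case: cbg].
    by move=> x; have /andP[h0 h1] := g01 x; rewrite subr_ge0 h1 lerBlDr lerDl h0.
  have e : one = (fun x => 1 * g x + (1 - g x)).
    by apply/funext => x; rewrite /one mul1r addrC subrK.
  have pgone : phi g <= phi one.
    rewrite e lin // mul1r lerDl; apply: pos => // x.
    by have /andP[h0 h1] := g01 x; rewrite subr_ge0.
  have hN : phi one < N%:R / n.+1%:R.
    by rewrite ltr_pdivlMr ?ltr0Sn //; exact: truncnS_gt.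
  by move: (lt_le_trans hN (le_trans pg pgone)); rewrite ltxx.
have c1 : countable [set (set0 : set X)] := countable1 _.
have c2 : countable (\bigcup_(n in [set: nat]) Fn n).
  apply: bigcup_countable; first exact: countableP.
  by move=> n _; apply: finite_set_countable.
apply: (sub_countable _ (@countU _ _ _ c1 c2)).
apply: subset_card_le => U FU.
case: (pselect (U !=set0)) => [nU|eU]; last by left; apply/nonemptyPn.
right; exists (Num.Def.truncn (phi (k U))^-1) => //; split=> //; split=> //.
have p := phik U FU nU.
rewrite -[X in _ < X](invrK (phi (k U))) ltf_pV2 ?posrE ?invr_gt0 ?ltr0Sn //.
exact: truncnS_gt.
Qed.

Theorem theorem4p8 (X : topologicalType) (hX : T3half X) :
  (CCC X <-> CCC_cozero X) /\ (CCC_cozero X <-> countable_sup_CX X) /\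
  ((exists phi : (X -> RR) -> RR, strictly_positive_functional phi) ->
     CCC X /\ CCC_cozero X /\ countable_sup_CX X).
Proof.
have e1 : CCC X <-> CCC_cozero X by split; [exact: L1 | exact: L2].
have e2 : CCC_cozero X <-> countable_sup_CX X.
  by split; [move=> h; apply: L4 => //; exact: L2 | exact: L3].
split=> //; split=> // hphi.
have c := @L5 X hX hphi.
by split=> //; split; [exact: L1 | exact: L4].
Qed.
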